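(* Let $X$ be a summable vertex parameter, and let $G=\bigsqcup_{i=1}^N G_i$ be the disjoint union of graphs $G_1,\dots,G_N$. Then $\mathcal{R}^{\mathrm{TE}}_X(G)\cong G_1'\,\square\,\cdots\,\square\, G_N'$ where $G_i'=\mathcal{R}^{\mathrm{TE}}_X(G_i)$, and $\mathcal{R}^{\mathrm{TS}}_X(G)\cong \mathcal{R}^{\mathrm{TS}}_X(G_1)\,\square\,\cdots\,\square\,\mathcal{R}^{\mathrm{TS}}_X(G_N)$, where $\square$ denotes the Cartesian product of graphs.
   Context: All graphs are finite and simple. A graph parameter $X$ is a vertex parameter defined by property $x$ if there is a property $x$ of vertex subsets such that for every graph $G$, $X(G)$ equals either (for every graph) the maximum, or (for every graph) the minimum, of $|B|$ over all $B\subseteq V(G)$ having property $x$ in $G$. $X$ is summable if for every graph $G$: $B\subseteq V(G)$ has property $x$ in $G$ if and only if $B=\bigcup_{C}B_C$ over the connected components $C$ of $G$, where each $B_C\subseteq V(C)$ has property $x$ in $C$. The token exchange $X$-reconfiguration graph $\mathcal{R}^{\mathrm{TE}}_X(G)$ has as vertices all $S\subseteq V(G)$ with $|S|=X(G)$ having property $x$ in $G$, with $S_1S_2$ an edge iff there exist $v_1\in S_1\setminus S_2$, $v_2\in S_2\setminus S_1$ with $S_1\setminus\{v_1\}=S_2\setminus\{v_2\}$. The token sliding graph $\mathcal{R}^{\mathrm{TS}}_X(G)$ has the same vertices, with the additional requirement $v_1v_2\in E(G)$ for adjacency. *)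

(* Defs.v *)
From mathcomp Require Import all_boot.
Set Implicit Arguments. Unset Strict Implicit. Unset Printing Implicit Defensive.

Definition simple_graph (T : finType) (e : rel T) : Prop :=
  symmetric e /\ irreflexive e.

Definition vprop := forall T : finType, rel T -> {set T} -> bool.

Definition iso_invariant (x : vprop) : Prop :=
  forall (T1 T2 : finType) (e1 : rel T1) (e2 : rel T2) (f : T1 -> T2),
    simple_graph e1 -> simple_graph e2 ->
    bijective f -> (forall u v, e1 u v = e2 (f u) (f v)) ->
    forall B : {set T1}, x T1 e1 B = x T2 e2 (f @: B).

Definition induced (T : finType) (e : rel T) (C : {set T}) :
  rel {y : T | y \in C} := fun u v => e (val u) (val v).

Definition components (T : finType) (e : rel T) : {set {set T}} :=
  [set [set y | connect e z y] | z : T].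

Definition summable (x : vprop) : Prop :=
  forall (T : finType) (e : rel T), simple_graph e ->
  forall B : {set T},
    x T e B <->
    exists f : forall C : {set T}, {set {y : T | y \in C}},
      (forall C : {set T}, C \in components e -> x _ (@induced T e C) (f C)) /\
      B = \bigcup_(C in components e) [set val y | y in f C].

(* S realizes X(G): it has property x and has maximum (b = true) resp.
   minimum (b = false) size among all sets with property x. *)
Definition optimal (b : bool) (x : vprop) (T : finType) (e : rel T)
  (S : {set T}) : bool :=
  x T e S && [forall B : {set T}, x T e B ==>
                 (if b then #|B| <= #|S| else #|S| <= #|B|)].

Definition RVert (b : bool) (x : vprop) (T : finType) (e : rel T) :=
  {S : {set T} | optimal b x e S}.

Definition TE_adj (b : bool) (x : vprop) (T : finType) (e : rel T) :
  rel (RVert b x e) := fun S1 S2 =>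
  [exists v1 : T, exists v2 : T,
     [&& v1 \in val S1 :\: val S2, v2 \in val S2 :\: val S1 &
         val S1 :\ v1 == val S2 :\ v2]].

Definition TS_adj (b : bool) (x : vprop) (T : finType) (e : rel T) :
  rel (RVert b x e) := fun S1 S2 =>
  [exists v1 : T, exists v2 : T,
     [&& v1 \in val S1 :\: val S2, v2 \in val S2 :\: val S1,
         val S1 :\ v1 == val S2 :\ v2 & e v1 v2]].

Definition dunion_rel (N : nat) (T : 'I_N -> finType) (e : forall i, rel (T i)) :
  rel {i : 'I_N & T i} :=
  fun u v => (tag u == tag v) && e (tag u) (tagged u) (tagged_as u v).

Definition box_adj (N : nat) (V : 'I_N -> Type) (r : forall i, V i -> V i -> Prop) :
  {dffun forall i : 'I_N, V i} -> {dffun forall i : 'I_N, V i} -> Prop :=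
  fun a b' => exists j : 'I_N, r j (a j) (b' j) /\ (forall i, i != j -> a i = b' i).

Definition graph_iso (A B : Type) (ra : A -> A -> Prop) (rb : B -> B -> Prop) : Prop :=
  exists f : A -> B, bijective f /\ (forall u v, ra u v <-> rb (f u) (f v)).

Arguments induced {T} e C.
Arguments optimal b x {T} e S.
Arguments RVert b x {T} e.
Arguments TE_adj b x {T} e S1 S2.
Arguments TS_adj b x {T} e S1 S2.
Arguments dunion_rel {N T} e u v.
Arguments box_adj {N V} r a b'.
Arguments graph_iso {A B} ra rb.

(* Main.v *)
Require Import Defs.
From mathcomp Require Import all_boot.
Set Implicit Arguments. Unset Strict Implicit. Unset Printing Implicit Defensive.

Lemma comp_disj (T : finType) (e : rel T) : symmetric e ->
  forall C1 C2 y, C1 \in components e -> C2 \in components e ->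
  y \in C1 -> y \in C2 -> C1 = C2.
Proof.
move=> se C1 C2 y /imsetP[z1 _ ->] /imsetP[z2 _ ->]; rewrite !inE => h1 h2.
have cs := sym_connect_sym se.
apply/setP=> w; rewrite !inE.
by rewrite (same_connect cs h1 w) (same_connect cs h2 w).
Qed.

Lemma summableP (x : vprop) (T : finType) (e : rel T) :
  summable x -> simple_graph e -> forall B : {set T},
  x T e B <-> forall C, C \in components e -> x _ (induced e C) [set y | val y \in B].
Proof.
move=> sx se B; split.
  case/(sx T e se B) => f [Hf ->] C HC.
  suff -> : [set y : {y : T | y \in C} | val y \in \bigcup_(C0 in components e) [set val y0 | y0 in f C0]] = f C by apply: Hf.
  apply/setP=> y; rewrite inE; apply/idP/idP.
    case/bigcupP=> C' HC' /imsetP[y' Hy' eq].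
    have eCC : C' = C.
      apply: (comp_disj se.1 (y := val y)) => //; last exact: valP.
      by rewrite eq; apply: valP.
    subst C'; have -> : y = y' by apply: val_inj.
    done.
  move=> Hy; apply/bigcupP; exists C => //; apply/imsetP; exists y => //.
move=> H; apply/(sx T e se B).
exists (fun C : {set T} => [set y : {y : T | y \in C} | val y \in B]); split => //.
apply/setP=> w; apply/idP/bigcupP.
  move=> Hw; exists [set y | connect e w y]; first by apply/imsetP; exists w.
  have hw : w \in [set y | connect e w y] by rewrite inE connect0.
  by apply/imsetP; exists (exist _ w hw); rewrite ?inE.
by case=> C HC /imsetP[y Hy ->]; rewrite inE in Hy.
Qed.

Lemma induced_simple (T : finType) (e : rel T) (C : {set T}) :
  simple_graph e -> simple_graph (induced e C).
Proof. by case=> s i; split=> [u v|u]; rewrite /induced; [apply: s | apply: i]. Qed.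

Lemma opt_card (b : bool) (x : vprop) (T0 : finType) (e0 : rel T0) (S1 S2 : {set T0}) :
  optimal b x e0 S1 -> optimal b x e0 S2 -> #|S1| = #|S2|.
Proof.
case/andP=> x1 /forallP o1 /andP[x2 /forallP o2].
have h1 := implyP (o1 S2) x2; have h2 := implyP (o2 S1) x1.
by clear o1 o2; move: h1 h2; case: b => /= h1 h2; apply/eqP; rewrite eqn_leq h1 h2.
Qed.

Section DU.
Local Unset Implicit Arguments.
Variables (N : nat) (T : 'I_N -> finType) (e : forall i : 'I_N, rel (T i)).
Hypothesis se : forall i : 'I_N, simple_graph (e i).

Local Notation S := {i : 'I_N & T i}.
Local Notation E := (dunion_rel e).

Definition inj {i} (t : T i) : S := existT (fun j => T j) i t.

Lemma E_inj {i : 'I_N} (a b : T i) : E (inj a) (inj b) = e i a b.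
Proof. by rewrite /dunion_rel /inj /= eqxx tagged_asE. Qed.

Lemma E_tag u v : E u v -> tag u = tag v.
Proof. by case/andP=> /eqP. Qed.

Lemma E_simple : simple_graph E.
Proof.
split.
  move=> [i a] [j b]; case: (eqVneq i j) => [eij|nij].
    subst j; have := E_inj a b; have := E_inj b a; rewrite /inj => -> ->.
    exact: (se i).1.
  by rewrite /dunion_rel /= (negbTE nij) eq_sym (negbTE nij).
move=> [i a]; have := E_inj a a; rewrite /inj => ->; exact: (se i).2.
Qed.

Lemma connect_inj {i : 'I_N} (a b : T i) : connect (e i) a b -> connect E (inj a) (inj b).
Proof.
move=> h.
have cl : closed (e i) [pred t | connect E (inj a) (inj t)].
  apply: intro_closed; first exact: sym_connect_sym (se i).1.
  move=> t u etu; rewrite !inE => c; apply: connect_trans c _.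
  by apply: connect1; rewrite E_inj.
by have := closed_connect cl h; rewrite !inE connect0 => <-.
Qed.

Lemma connect_E {i : 'I_N} (a : T i) (w : S) : connect E (inj a) w ->
  w = inj (tagged_as (inj a) w) /\ connect (e i) a (tagged_as (inj a) w).
Proof.
move=> h.
have cl : closed E [pred w | [exists t, (w == inj t) && connect (e i) a t]].
  apply: intro_closed; first exact: sym_connect_sym E_simple.1.
  move=> u v euv; rewrite !inE => /existsP[t /andP[/eqP eu ct]].
  subst u; case: v euv => j b euv.
  have ej : i = j by have := E_tag _ _ euv.
  subst j; apply/existsP; exists b; rewrite eqxx /=.
  apply: connect_trans ct _; apply: connect1; by rewrite -E_inj.
have := closed_connect cl h; rewrite !inE.
have -> : [exists t, (inj a == inj t) && connect (e i) a t].
  by apply/existsP; exists a; rewrite eqxx connect0.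
move/esym/existsP=> [t /andP[/eqP -> ct]].
by rewrite /inj tagged_asE.
Qed.


Variable x : vprop.
Hypothesis ix : iso_invariant x.
Hypothesis sx : summable x.

Definition proj (i : 'I_N) (B : {set S}) : {set T i} := [set t | inj t \in B].

Lemma hproof (i : 'I_N) (t0 : T i) (y : {y : T i | y \in [set y | connect (e i) t0 y]}) :
  inj (val y) \in [set w | connect E (inj t0) w].
Proof. by rewrite inE; apply: connect_inj; move: (valP y); rewrite inE. Qed.

Lemma gproof (i : 'I_N) (t0 : T i) (w : {w : S | w \in [set w | connect E (inj t0) w]}) :
  tagged_as (inj t0) (val w) \in [set y | connect (e i) t0 y].
Proof. by rewrite inE; move: (valP w); rewrite inE => /(connect_E t0 (val w)) []. Qed.

Lemma core (i : 'I_N) (t0 : T i) (B : {set S}) :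
  x _ (induced E [set w | connect E (inj t0) w]) [set w | val w \in B] =
  x _ (induced (e i) [set y | connect (e i) t0 y]) [set y | inj (val y) \in B].
Proof.
pose h := fun y => exist (fun w => w \in [set w | connect E (inj t0) w]) (inj (val y)) (hproof _ _ y).
pose g := fun w => exist (fun y => y \in [set y | connect (e i) t0 y]) (tagged_as (inj t0) (val w)) (gproof _ _ w).
have hK : cancel h g by move=> y; apply: val_inj => /=; rewrite /inj tagged_asE.
have gK : cancel g h.
  move=> w; apply: val_inj => /=; symmetry.
  by move: (valP w); rewrite inE => /(connect_E t0 (val w)) [].
have edg : forall u v, induced (e i) [set y | connect (e i) t0 y] u v =
    induced E [set w | connect E (inj t0) w] (h u) (h v).
  by move=> u v; rewrite /induced /= E_inj.
rewrite (ix _ _ _ _ h (induced_simple _ (se i)) (induced_simple _ E_simple) (Bijective hK gK) edg).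
congr (x _ _ _); apply/setP=> w; rewrite inE; apply/idP/imsetP.
  move=> Hw; exists (g w); last by rewrite gK.
  by rewrite inE /=; move: (valP w); rewrite inE => /(connect_E t0 (val w)) [<-].
by case=> y; rewrite inE => Hy ->.
Qed.

Lemma projE (B : {set S}) : x S E B <-> forall i, x (T i) (e i) (proj i B).
Proof.
split.
  move/(summableP sx E_simple B) => H i; apply/(summableP sx (se i)) => C /imsetP[t0 _ ->].
  have -> : [set y : {y : T i | y \in [set y | connect (e i) t0 y]} | val y \in proj i B]
          = [set y | inj (val y) \in B] by apply/setP=> y; rewrite !inE.
  by rewrite -core; apply: H; apply/imsetP; exists (inj t0).
move=> H; apply/(summableP sx E_simple B) => C /imsetP[[i t0] _ ->].
have := core i t0 B; rewrite /inj => ->.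
have := (summableP sx (se i) (proj i B)).1 (H i) [set y | connect (e i) t0 y].
have -> : [set y : {y : T i | y \in [set y | connect (e i) t0 y]} | val y \in proj i B]
          = [set y | inj (val y) \in B] by apply/setP=> y; rewrite !inE.
by apply; apply/imsetP; exists t0.
Qed.


Lemma inj_inj (i : 'I_N) : injective (@inj i).
Proof. by move=> a b h; have := congr1 (tagged_as (inj a)) h; rewrite /inj !tagged_asE. Qed.

Lemma injE (i : 'I_N) (a b : T i) : (inj a == inj b) = (a == b).
Proof. exact: (inj_eq (@inj_inj i)). Qed.

Definition glue (F : forall i : 'I_N, {set T i}) : {set S} := [set w | tagged w \in F (tag w)].

Lemma proj_glue (F : forall i : 'I_N, {set T i}) (i : 'I_N) : proj i (glue F) = F i.
Proof. by apply/setP=> t; rewrite !inE. Qed.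

Lemma glue_proj (B : {set S}) : glue (fun i => proj i B) = B.
Proof. by apply/setP=> -[i t]; rewrite !inE. Qed.

Lemma card_glue (F : forall i : 'I_N, {set T i}) : #|glue F| = \sum_i #|F i|.
Proof.
transitivity (\sum_(i : 'I_N) \sum_(t : T i | t \in F i) 1); last first.
  by apply: eq_bigr => i _; rewrite sum1_card.
rewrite sig_big_dep /= -sum1_card; apply: eq_bigl => p; by rewrite inE.
Qed.

Lemma card_proj (B : {set S}) : #|B| = \sum_i #|proj i B|.
Proof. by rewrite -{1}(glue_proj B) card_glue. Qed.

Lemma projD1_same (B : {set S}) (i : 'I_N) (a : T i) : proj i (B :\ inj a) = proj i B :\ a.
Proof. by apply/setP=> t; rewrite !inE injE. Qed.

Lemma projD1_other (B : {set S}) (i j : 'I_N) (a : T i) : j != i -> proj j (B :\ inj a) = proj j B.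
Proof.
move=> nji; apply/setP=> t; rewrite !inE.
case: eqP => [/(congr1 tag) /= eji|//]; by rewrite eji eqxx in nji.
Qed.


Variable b : bool.

Lemma opt_proj (S0 : {set S}) : optimal b x E S0 -> forall i, optimal b x (e i) (proj i S0).
Proof.
case/andP=> xS /forallP opt i; apply/andP; split; first exact: (proj1 (projE S0) xS i).
apply/forallP=> B'; apply/implyP=> xB'.
pose S' := (@inj i @: B') :|: [set w in S0 | tag w != i].
have pi : proj i S' = B'.
  apply/setP=> t; rewrite !inE mem_imset; last exact: inj_inj.
  by rewrite eqxx andbF orbF.
have pj : forall j, j != i -> proj j S' = proj j S0.
  move=> j nji; apply/setP=> t; rewrite !inE nji andbT.
  case: imsetP => [[a _ /(congr1 tag) /= eji]|//].
  by rewrite eji eqxx in nji.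
have xS' : x S E S'.
  apply/(projE S') => j; case: (eqVneq j i) => [->|nji]; first by rewrite pi.
  by rewrite pj //; exact: (proj1 (projE S0) xS j).
have := implyP (opt S') xS'.
have E1 : \sum_j #|proj j S'| = #|B'| + \sum_(j | j != i) #|proj j S0|.
  rewrite (bigD1 i) //= pi; congr (_ + _); by apply: eq_bigr => j nji; rewrite pj.
have E0 : \sum_j #|proj j S0| = #|proj i S0| + \sum_(j | j != i) #|proj j S0|.
  by rewrite (bigD1 i).
rewrite (card_proj S') (card_proj S0) E1 E0.
by case: b; rewrite leq_add2r.
Qed.

Lemma opt_glue (F : forall i : 'I_N, {set T i}) :
  (forall i, optimal b x (e i) (F i)) -> optimal b x E (glue F).
Proof.
move=> oF; apply/andP; split.
  by apply/(projE (glue F)) => i; rewrite proj_glue; case/andP: (oF i).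
apply/forallP=> B; apply/implyP=> xB.
rewrite card_glue (card_proj B).
have xBi := proj1 (projE B) xB.
case: b oF => oF; apply: leq_sum => i _; case/andP: (oF i) => _ /forallP/(_ (proj i B));
  by move/implyP/(_ (xBi i)).
Qed.


Lemma adj_core (S1 S2 : {set S}) (P : S -> S -> bool)
  (hc : forall j, #|proj j S1| = #|proj j S2|) :
  (exists v1 v2, [/\ v1 \in S1 :\: S2, v2 \in S2 :\: S1, S1 :\ v1 = S2 :\ v2 & P v1 v2]) <->
  (exists j (a1 a2 : T j), [/\ a1 \in proj j S1 :\: proj j S2, a2 \in proj j S2 :\: proj j S1,
      proj j S1 :\ a1 = proj j S2 :\ a2, P (inj a1) (inj a2) &
      forall k, k != j -> proj k S1 = proj k S2]).
Proof.
split.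
  case=> -[i a1] [[j a2] [h1 h2 eq hP]].
  case: (eqVneq j i) => [eji|nji]; last first.
    exfalso; have := congr1 (proj i) eq.
    rewrite (projD1_same S1 _ a1) (projD1_other S2 _ _ a2); last by rewrite eq_sym.
    move=> eqi; have c := cardsD1 a1 (proj i S1).
    have mem : a1 \in proj i S1 by move: h1; rewrite !inE => /andP[].
    rewrite mem hc eqi in c.
    by move/eqP: c; rewrite -{1}(add0n #|proj i S2|) eqn_add2r.
  subst j; exists i, a1, a2; split.
  - by move: h1; rewrite !inE.
  - by move: h2; rewrite !inE.
  - by have := congr1 (proj i) eq; rewrite !projD1_same.
  - exact: hP.
  move=> k nki; have := congr1 (proj k) eq.
  by rewrite (projD1_other S1 _ _ a1 nki) (projD1_other S2 _ _ a2 nki).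
case=> j [a1 [a2 [h1 h2 eq hP ho]]].
exists (inj a1), (inj a2); split => //.
- by move: h1; rewrite !inE.
- by move: h2; rewrite !inE.
apply/setP=> -[k t]; case: (eqVneq k j) => [ekj|nkj].
  subst k; move/setP: eq => /(_ t); rewrite !inE.
  by rewrite -(injE _ t a1) -(injE _ t a2).
move/setP: (ho k nkj) => /(_ t); rewrite !inE /inj => ->.
have ne : forall a : T j, (existT (fun i => T i) k t == existT (fun i => T i) j a) = false.
  by move=> a; apply/eqP => /(congr1 tag) /= ekj; rewrite ekj eqxx in nkj.
by rewrite !ne.
Qed.


Definition Phi (S0 : RVert b x E) : {dffun forall i : 'I_N, RVert b x (e i)} :=
  finfun (fun i => exist (fun B => optimal b x (e i) B) (proj i (val S0)) (opt_proj (val S0) (valP S0) i)).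

Definition Psi (F : {dffun forall i : 'I_N, RVert b x (e i)}) : RVert b x E :=
  exist (fun B => optimal b x E B) (glue (fun i => val (F i))) (opt_glue _ (fun i => valP (F i))).

Lemma PhiE (S0 : RVert b x E) i : val (Phi S0 i) = proj i (val S0).
Proof. by rewrite ffunE. Qed.

Lemma Phi_bij : bijective Phi.
Proof.
exists Psi.
  move=> S0; apply: val_inj => /=; rewrite -[RHS]glue_proj.
  by apply/setP=> w; rewrite !inE PhiE inE.
move=> F; apply/ffunP=> i; apply: val_inj; by rewrite PhiE /= proj_glue.
Qed.

Lemma Phi_eqv (S1 S2 : RVert b x E) i :
  Phi S1 i = Phi S2 i <-> proj i (val S1) = proj i (val S2).
Proof.
split=> [h|h]; first by rewrite -!PhiE h.
by apply: val_inj; rewrite !PhiE.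
Qed.

Lemma hcard (S1 S2 : RVert b x E) j : #|proj j (val S1)| = #|proj j (val S2)|.
Proof. exact: opt_card (opt_proj _ (valP S1) j) (opt_proj _ (valP S2) j). Qed.

Lemma adj_TE (S1 S2 : RVert b x E) :
  TE_adj b x E S1 S2 <-> box_adj (fun i u v => TE_adj b x (e i) u v) (Phi S1) (Phi S2).
Proof.
have key := adj_core (val S1) (val S2) (fun _ _ => true) (hcard S1 S2).
split.
  case/existsP => v1 /existsP [v2 /and3P [h1 h2 /eqP h3]].
  case: (proj1 key (ex_intro _ v1 (ex_intro _ v2 (And4 h1 h2 h3 isT)))) => j [a1 [a2 [k1 k2 k3 _ k5]]].
  exists j; split.
    by apply/existsP; exists a1; apply/existsP; exists a2; rewrite !PhiE k1 k2 k3 eqxx.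
  by move=> i nij; apply/Phi_eqv; apply: k5.
case=> j [/existsP [a1 /existsP [a2]]]; rewrite !PhiE => /and3P [k1 k2 /eqP k3] ho.
have := proj2 key (ex_intro _ j (ex_intro _ a1 (ex_intro _ a2
   (And5 k1 k2 k3 isT (fun k nk => proj1 (Phi_eqv S1 S2 k) (ho k nk)))))).
case=> v1 [v2 [h1 h2 h3 _]].
by apply/existsP; exists v1; apply/existsP; exists v2; rewrite h1 h2 h3 eqxx.
Qed.

Lemma adj_TS (S1 S2 : RVert b x E) :
  TS_adj b x E S1 S2 <-> box_adj (fun i u v => TS_adj b x (e i) u v) (Phi S1) (Phi S2).
Proof.
have key := adj_core (val S1) (val S2) E (hcard S1 S2).
split.
  case/existsP => v1 /existsP [v2 /and4P [h1 h2 /eqP h3 h4]].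
  case: (proj1 key (ex_intro _ v1 (ex_intro _ v2 (And4 h1 h2 h3 h4)))) => j [a1 [a2 [k1 k2 k3 k4 k5]]].
  exists j; split.
    apply/existsP; exists a1; apply/existsP; exists a2; rewrite !PhiE k1 k2 k3 eqxx.
    by rewrite -E_inj.
  by move=> i nij; apply/Phi_eqv; apply: k5.
case=> j [/existsP [a1 /existsP [a2]]]; rewrite !PhiE => /and4P [k1 k2 /eqP k3 k4] ho.
have k4' : E (inj a1) (inj a2) by rewrite E_inj.
have := proj2 key (ex_intro _ j (ex_intro _ a1 (ex_intro _ a2
   (And5 k1 k2 k3 k4' (fun k nk => proj1 (Phi_eqv S1 S2 k) (ho k nk)))))).
case=> v1 [v2 [h1 h2 h3 h4]].
by apply/existsP; exists v1; apply/existsP; exists v2; rewrite h1 h2 h3 h4 eqxx.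
Qed.

End DU.

Theorem theorem3p3 (x : vprop) (b : bool) (N : nat) (T : 'I_N -> finType)
  (e : forall i : 'I_N, rel (T i)) :
  iso_invariant x -> summable x -> (forall i, simple_graph (e i)) ->
  graph_iso (TE_adj b x (dunion_rel e))
            (box_adj (fun i => fun u v => TE_adj b x (e i) u v)) /\
  graph_iso (TS_adj b x (dunion_rel e))
            (box_adj (fun i => fun u v => TS_adj b x (e i) u v)).
Proof.
move=> ix sx se; split; exists (Phi N T e se x ix sx b); split.
- exact: Phi_bij.
- exact: adj_TE.
- exact: Phi_bij.
- exact: adj_TS.
Qed.
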